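(* Let $m\ge1$ be an integer and $p=1/2^m$. Let $f:\{0,1\}^n\to\mathbb{R}$ and $g=\mathrm{Red}(f):\{0,1\}^{mn}\to\mathbb{R}$ as defined below. For $S\subseteq\{1,\dots,mn\}$ let $S_i=S\cap\{(i-1)m+1,\dots,im\}$ for $i=1,\dots,n$, let $S'=\{i:|S_i|>0\}\subseteq\{1,\dots,n\}$ and $k=|S'|$. Then \[ \hat g(S)=\Big(-\sqrt{\tfrac{p}{1-p}}\Big)^k(-1)^{|S|}\hat f(S'), \] where $\hat g$ is w.r.t. the uniform measure on $\{0,1\}^{mn}$ and $\hat f$ is w.r.t. $\mu_p$.
   Context: For $0<p<1$, $\mu_p$ denotes the product measure on $\{0,1\}^n$ with $\mu_p(x)=p^{\sum_i x_i}(1-p)^{n-\sum_i x_i}$; $\mu_{1/2}$ is the uniform measure. Elements of $\{0,1\}^n$ are identified with subsets of $\{1,\dots,n\}$. For $S,T\subseteq\{1,\dots,n\}$, $u_S(T)=\big(-\sqrt{(1-p)/p}\big)^{|S\cap T|}\big(\sqrt{p/(1-p)}\big)^{|S\setminus T|}$ (for $p=1/2$, $u_S(T)=(-1)^{|S\cap T|}$); these form an orthonormal basis of $L^2(\mu_p)$ and $\hat f(S)=\mathbb{E}_{\mu_p}[fu_S]$ is the Fourier–Walsh coefficient, so $f=\sum_S\hat f(S)u_S$. Reduction for $p=t/2^m$ (here $t=1$): write $y\in\{0,1\}^{mn}$ as $(y^1,\dots,y^n)$, $y^i=(y^i_1,\dots,y^i_m)\in\{0,1\}^m$, where $y^i_j$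 is coordinate $(i-1)m+j$ of $y$. Let $\mathrm{Bin}(y^i)=\sum_{j=0}^{m-1}2^jy^i_{m-j}$, $h(y^i)=1$ if $\mathrm{Bin}(y^i)\ge 2^m-t$ and $0$ otherwise, and $\mathrm{Red}(f)=g$, $g(y)=f(h(y^1),\dots,h(y^n))$. *)

(* Defs.v *)
(* Points of {0,1}^n are subsets of 'I_n (0-based coordinates). *)
From mathcomp Require Import all_boot all_order all_algebra.
Set Implicit Arguments. Unset Strict Implicit. Unset Printing Implicit Defensive.
Import Order.TTheory GRing.Theory Num.Theory.
Local Open Scope ring_scope.

Section Defs.
Variable R : rcfType.

Definition mu_p (p : R) (n : nat) (x : {set 'I_n}) : R :=
  p ^+ #|x| * (1 - p) ^+ (n - #|x|).

Definition u_p (p : R) (n : nat) (S T : {set 'I_n}) : R :=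
  (- Num.sqrt ((1 - p) / p)) ^+ #|S :&: T| * (Num.sqrt (p / (1 - p))) ^+ #|S :\: T|.

Definition fourier (p : R) (n : nat) (f : {set 'I_n} -> R) (S : {set 'I_n}) : R :=
  \sum_(T : {set 'I_n}) mu_p p T * f T * u_p p S T.

(* bit of y at 0-based coordinate k (1-based coordinate k+1) *)
Definition ybit (m n : nat) (y : {set 'I_(m * n)}) (k : nat) : bool :=
  [exists x : 'I_(m * n), (val x == k) && (x \in y)].

(* Bin(y^i) = sum_{j=0}^{m-1} 2^j y^i_{m-j}, block i (0-based); y^i_{j'} (1-based j')
   is 0-based coordinate i*m + (j'-1). *)
Definition Bin (m n : nat) (y : {set 'I_(m * n)}) (i : nat) : nat :=
  \sum_(j < m) 2 ^ j * ybit y (i * m + (m - j).-1).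

(* h(y^i) = 1 iff Bin(y^i) >= 2^m - t, with t = 1 *)
Definition hbit (m n : nat) (y : {set 'I_(m * n)}) (i : nat) : bool :=
  (2 ^ m - 1 <= Bin y i)%N.

Definition Red (m n : nat) (f : {set 'I_n} -> R) (y : {set 'I_(m * n)}) : R :=
  f [set i : 'I_n | hbit y i].

(* S_i = S ∩ block i (0-based block index) *)
Definition Sblock (m n : nat) (S : {set 'I_(m * n)}) (i : 'I_n) : {set 'I_(m * n)} :=
  [set x in S | (val x %/ m == val i)%N].

Definition Sprime (m n : nat) (S : {set 'I_(m * n)}) : {set 'I_n} :=
  [set i : 'I_n | (0 < #|Sblock S i|)%N].

End Defs.
Arguments Red {R} m {n} f y.

(* Main.v *)
Require Import Defs.
From mathcomp Require Import all_boot all_order all_algebra.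
From mathcomp Require Import zify ring lra.
Set Implicit Arguments. Unset Strict Implicit. Unset Printing Implicit Defensive.
Import Order.TTheory GRing.Theory Num.Theory.
Local Open Scope ring_scope.


Section H.
Variables m n : nat.
Hypothesis hm : (0 < m)%N.
Local Open Scope nat_scope.

Lemma op_lt (i : 'I_n) (j : 'I_m) : (i * m + j < m * n)%N.
Proof.
have hi := ltn_ord i; have hj := ltn_ord j.
have : (i.+1 * m <= n * m)%N by rewrite leq_mul2r hi orbT.
nia.
Qed.

Definition op i j : 'I_(m * n) := Ordinal (op_lt i j).
Lemma blk_lt (x : 'I_(m * n)) : (x %/ m < n)%N.
Proof. rewrite ltn_divLR //; have := ltn_ord x; move: (nat_of_ord x) => k; by rewrite mulnC. Qed.
Definition blk (x : 'I_(m * n)) : 'I_n := Ordinal (blk_lt x).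
Definition pos (x : 'I_(m * n)) : 'I_m := Ordinal (ltn_pmod x hm).

Lemma op_blk_pos x : op (blk x) (pos x) = x.
Proof. by apply: val_inj; rewrite /= -divn_eq. Qed.

Lemma blk_op i j : blk (op i j) = i.
Proof.
apply: val_inj => /=; rewrite divnMDl // divn_small ?addn0 //.
Qed.

Lemma pos_op i j : pos (op i j) = j.
Proof. by apply: val_inj => /=; rewrite modnMDl modn_small. Qed.

Definition Phi (F : {ffun 'I_n -> {set 'I_m}}) : {set 'I_(m * n)} :=
  [set x | pos x \in F (blk x)].
Definition Psi (T : {set 'I_(m * n)}) : {ffun 'I_n -> {set 'I_m}} :=
  [ffun i => [set j | op i j \in T]].

Lemma Phi_bij : bijective Phi.
Proof.
exists Psi.
  move=> F; apply/ffunP => i; apply/setP => j.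
  by rewrite ffunE !inE blk_op pos_op.
move=> T; apply/setP => x; by rewrite !inE ffunE inE op_blk_pos.
Qed.

Lemma in_Phi F i j : (op i j \in Phi F) = (j \in F i).
Proof. by rewrite inE blk_op pos_op. Qed.

Lemma card_dec (A : {set 'I_(m * n)}) :
  #|A| = (\sum_(i < n) #|[set j | op i j \in A]|)%N.
Proof.
transitivity (\sum_(i < n) \sum_(j < m) (if op i j \in A then 1 else 0)).
  rewrite pair_big /= -sum1_card big_mkcond /=.
  have hb : {on [pred x | true], bijective (fun p : 'I_n * 'I_m => op p.1 p.2)}.
    apply: onW_bij; exists (fun x => (blk x, pos x)).
      by case=> i j /=; rewrite blk_op pos_op.
    by move=> x /=; rewrite op_blk_pos.
  by rewrite (reindex _ hb).
apply: (@eq_bigr nat 0 addn) => i _.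
rewrite -sum1_card -big_mkcond /=.
by apply: eq_bigl => j; rewrite inE.
Qed.
End H.


Lemma geom2 k : (\sum_(j < k) 2 ^ j)%N = (2 ^ k - 1)%N.
Proof.
elim: k => [|k IH]; first by rewrite big_ord0.
rewrite big_ord_recr /= IH expnS.
have : (0 < 2 ^ k)%N by rewrite expn_gt0.
lia.
Qed.

Section H2.
Variables m n : nat.
Hypothesis hm : (0 < m)%N.
Local Open Scope nat_scope.

Lemma ybit_op (y : {set 'I_(m * n)}) (i : 'I_n) (j : 'I_m) :
  ybit y (i * m + j) = (op hm i j \in y).
Proof.
apply/existsP/idP => [[x /andP[/eqP hx xy]]|hy].
  by have -> : op hm i j = x by apply: val_inj.
by exists (op hm i j); rewrite eqxx hy.
Qed.

Lemma hbit_op (y : {set 'I_(m * n)}) (i : 'I_n) :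
  hbit y i = [forall j : 'I_m, op hm i j \in y].
Proof.
rewrite /hbit /Bin.
have e : forall j : 'I_m, ybit y (i * m + (m - j).-1) = (op hm i (rev_ord j) \in y).
  move=> j; rewrite -ybit_op /=; congr ybit; have := ltn_ord j; lia.
under eq_bigr do rewrite e.
case: (boolP [forall j, _]) => [/forallP hall|/forallP hn].
  under eq_bigr do rewrite hall muln1.
  by rewrite geom2 leqnn.
have [j0 hj0] : exists j0 : 'I_m, op hm i j0 \notin y.
  by apply/existsP; rewrite -negb_forall; apply/forallP.
apply/negbTE; rewrite -ltnNge.
set j1 := rev_ord j0.
have hb : op hm i (rev_ord j1) \notin y by rewrite rev_ordK.
rewrite (bigD1 j1) //= (negbTE hb) muln0 add0n.
have h1 : \sum_(j < m | j != j1) 2 ^ j * (op hm i (rev_ord j) \in y)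
   <= \sum_(j < m | j != j1) 2 ^ j.
  apply: leq_sum => j _; case: (_ \in _); rewrite ?muln1 ?muln0 //.
have h2 := geom2 m.
rewrite (bigD1 j1) //= in h2.
have hp : 0 < 2 ^ (m - j0.+1) by rewrite expn_gt0.
rewrite -h2; apply: (leq_ltn_trans h1).
by rewrite -[X in X < _]add0n ltn_add2r.
Qed.
End H2.


Lemma sign_sum (R : rcfType) (T : finType) (A : {set T}) :
  \sum_(B : {set T}) (-1 : R) ^+ #|A :&: B| = if A == set0 then (2 ^ #|T|)%:R else 0.
Proof.
case: eqP => [->|/eqP /set0Pn [a ha]].
  under eq_bigr do rewrite set0I cards0 expr0.
  rewrite sumr_const; have := card_powerset [set: T]; rewrite powersetT !cardsT => ->; by [].

pose tog (B : {set T}) := if a \in B then B :\ a else a |: B.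
have togK : involutive tog.
  move=> B; rewrite /tog; case: (boolP (a \in B)) => hB.
    by rewrite setD11 setD1K.
  by rewrite setU11 setU1K.
have hneg : forall B, (-1 : R) ^+ #|A :&: tog B| = - (-1) ^+ #|A :&: B|.
  move=> B; rewrite /tog; case: (boolP (a \in B)) => hB.
    rewrite [in RHS](cardsD1 a) inE ha hB /= exprS mulN1r opprK.
    have -> : A :&: (B :\ a) = (A :&: B) :\ a.
      by apply/setP => x; rewrite !inE; case: (x == a); rewrite ?andbF.
    by [].
  have -> : A :&: (a |: B) = a |: (A :&: B).
    by apply/setP => x; rewrite !inE; case: eqP => // ->; rewrite ha.
  by rewrite cardsU1 inE (negbTE hB) andbF /= exprS mulN1r.
set S := \sum_B _.
have : S = - S.
  rewrite {1}/S (reindex_inj (inv_inj togK)) /=.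
  rewrite -sumrN; apply: eq_bigr => B _; exact: hneg.
lra.
Qed.


Lemma prod_if1 (R : comNzRingType) (I : finType) (A : {set I}) (a : R) :
  \prod_i (if i \in A then a else 1) = a ^+ #|A|.
Proof. by rewrite -big_mkcond /= prodr_const. Qed.

Lemma prod_const_ord (R : comNzRingType) k (x : R) : \prod_(i < k) x = x ^+ k.
Proof. elim: k => [|k IH]; first by rewrite big_ord0. by rewrite big_ord_recr IH exprSr. Qed.

Section Main.
Variable R : rcfType.
Variables m n : nat.
Hypothesis hm : (0 < m)%N.
Variable S : {set 'I_(m * n)}.

Definition Sb (i : 'I_n) : {set 'I_m} := [set j | op hm i j \in S].

Lemma Sprime_Sb i : (i \in Sprime S) = (Sb i != set0).
Proof.
rewrite inE -!card_gt0; apply/card_gt0P/card_gt0P => [[x]|[j]].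
  rewrite !inE => /andP[xS /eqP hx].
  exists (pos hm x); rewrite inE.
  have -> : i = blk hm x by apply: val_inj.
  by rewrite op_blk_pos.
rewrite inE => hj; exists (op hm i j); rewrite !inE hj /=.
by have := blk_op hm i j => /(congr1 val) /= ->.
Qed.

Lemma card_S : #|S| = (\sum_i #|Sb i|)%N.
Proof. by rewrite (card_dec hm S). Qed.

Lemma card_SPhi F : #|S :&: Phi hm F| = (\sum_i #|Sb i :&: F i|)%N.
Proof.
rewrite (card_dec hm); apply: eq_bigr => i _; apply: eq_card => j.
by rewrite !inE blk_op pos_op.
Qed.

Lemma hset_Phi (F : {ffun 'I_n -> {set 'I_m}}) : [set i : 'I_n | hbit (Phi hm F) i] = [set i | F i == setT].
Proof.
apply/setP => i; rewrite !inE (hbit_op hm).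
apply/forallP/eqP => [h|e j]; last by rewrite in_Phi e inE.
by apply/setP => j; rewrite inE; have := h j; rewrite in_Phi.
Qed.


Definition pp : R := (2 ^+ m)^-1.
Definition sg (i : 'I_n) : R := (-1) ^+ #|Sb i|.
Definition V (i : 'I_n) (x : {set 'I_n}) : R :=
  if i \in x then pp * sg i else (if Sb i == set0 then 1 else 0) - pp * sg i.

Lemma step1 (f : {set 'I_n} -> R) :
  fourier (2^-1) (Red m f) S =
  \sum_(T : {set 'I_(m * n)}) f [set i : 'I_n | hbit T i] * ((2^-1) ^+ (m * n) * (-1) ^+ #|S :&: T|).
Proof.
have h2 : (2 : R) != 0 by rewrite pnatr_eq0.
have hc : 1 - (2 : R)^-1 = 2^-1 by field.
have hc1 : (2 : R)^-1 / 2^-1 = 1 by rewrite divff // invr_eq0.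
rewrite /fourier; apply: eq_bigr => T _.
rewrite /mu_p /u_p /Red hc hc1 sqrtr1 expr1n mulr1 -exprD subnKC; last first.
  by have := max_card (mem T); rewrite card_ord.
by rewrite mulrCA mulrA.
Qed.


Lemma step2 (f : {set 'I_n} -> R) :
  fourier (2^-1) (Red m f) S =
  \sum_(F : {ffun 'I_n -> {set 'I_m}}) f [set i : 'I_n | F i == setT] *
     \prod_i (pp * (-1) ^+ #|Sb i :&: F i|).
Proof.
rewrite step1 (reindex (Phi hm) (onW_bij _ (@Phi_bij m n hm))) /=.
apply: eq_bigr => F _.
rewrite hset_Phi card_SPhi expr_sum big_split /= prod_const_ord.
by rewrite /pp -exprVn exprM.
Qed.

Lemma block (i : 'I_n) (x : {set 'I_n}) :
  \sum_(B | B \in [pred B : {set 'I_m} | (B == setT) == (i \in x)]) pp * (-1) ^+ #|Sb i :&: B| = V i x.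
Proof.
rewrite /V; case: (boolP (i \in x)) => hi.
  rewrite (eq_bigl (pred1 setT)) ?big_pred1_eq ?setIT //.
  by move=> B; rewrite inE /= eqb_id.
rewrite (eq_bigl (fun B => B != setT)); last by move=> B; rewrite inE /= eqbF_neg.
have E : \sum_B pp * (-1) ^+ #|Sb i :&: B| =
    pp * (-1) ^+ #|Sb i :&: setT| + \sum_(B | B != setT) pp * (-1) ^+ #|Sb i :&: B|.
  by rewrite (bigD1 setT).
rewrite -mulr_sumr sign_sum card_ord setIT in E.
have hp : pp * (2 ^ m)%:R = 1 :> R.
  by rewrite /pp natrX mulVf // expf_neq0 // pnatr_eq0.
rewrite /sg; move: E; case: (Sb i == set0); rewrite ?hp ?mulr0 => E; lra.
Qed.

Lemma step3 (f : {set 'I_n} -> R) :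
  fourier (2^-1) (Red m f) S = \sum_(x : {set 'I_n}) f x * \prod_i V i x.
Proof.
rewrite step2 (partition_big (fun F : {ffun 'I_n -> {set 'I_m}} => [set i | F i == setT]) predT) //=.
apply: eq_bigr => x _.
rewrite (eq_bigr (fun F : {ffun 'I_n -> {set 'I_m}} => f x * \prod_i (pp * (-1) ^+ #|Sb i :&: F i|))); last first.
  by move=> F /eqP ->.
rewrite -mulr_sumr; congr (_ * _).
rewrite (eq_bigl (fun F => F \in family (fun i => [pred B : {set 'I_m} | (B == setT) == (i \in x)]))).
  symmetry; rewrite (eq_bigr _ (fun i _ => esym (block i x))) bigA_distr_big_dep /=. by [].
move=> F; apply/eqP/familyP => [<- i | h].
  by rewrite !inE.
apply/setP => i; rewrite inE; have := h i; rewrite inE => /eqP //.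
Qed.

Lemma pp_gt0 : 0 < pp.
Proof. by rewrite /pp invr_gt0 exprn_gt0. Qed.

Lemma pp_lt1 : pp < 1.
Proof.
rewrite /pp invf_lt1 ?exprn_gt0 //.
have h : (2 : R) <= 2 ^+ m.
  by rewrite -[X in X <= _]expr1 ler_eXn2l // ?ltr1n.
by apply: lt_le_trans h; rewrite ltr1n.
Qed.

Lemma prodV x :
  \prod_i V i x = (- Num.sqrt (pp / (1 - pp))) ^+ #|Sprime S| * (-1) ^+ #|S| *
     mu_p pp x * u_p pp (Sprime S) x.
Proof.
have h0 := pp_gt0; have h1 := pp_lt1.
set q := Num.sqrt (pp / (1 - pp)); set r := Num.sqrt ((1 - pp) / pp).
have hqr : q * r = 1.
  rewrite /q /r -sqrtrM; last by apply: divr_ge0; lra.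
  rewrite (_ : _ * _ = 1) ?sqrtr1 //; field; apply/andP; split; apply/eqP; lra.
have hq2 : q ^+ 2 = pp / (1 - pp).
  by rewrite /q sqr_sqrtr //; apply: divr_ge0; lra.
have hcx : (n - #|x|)%N = #|~: x|.
  by rewrite [RHS]cardsCs setCK card_ord.
rewrite /mu_p /u_p hcx card_S expr_sum.
rewrite -!prod_if1 -!big_split /=.
apply: eq_bigr => i _.
rewrite -/q -/r in_setI in_setD in_setC Sprime_Sb /V /sg.
case: (Sb i =P set0) => [->|_] /=; rewrite ?cards0 ?expr0;
  case: (i \in x) => /=; rewrite ?mul1r ?mulr1.
- by [].
- by [].
- transitivity (q * r * (pp * (-1) ^+ #|Sb i|)); first by rewrite hqr mul1r.
  ring.
- transitivity (- ((q ^+ 2 * (1 - pp)) * (-1) ^+ #|Sb i|)); last by ring.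
  rewrite hq2 divfK; first by ring.
  by apply/eqP; lra.
Qed.


End Main.

Theorem proposition2p1 (R : rcfType) (m n : nat) (hm : (1 <= m)%N)
    (f : {set 'I_n} -> R) (S : {set 'I_(m * n)}) :
  let p : R := (2 ^+ m)^-1 in
  let k := #|Sprime S| in
  fourier (2^-1) (Red m f) S =
    (- Num.sqrt (p / (1 - p))) ^+ k * (-1) ^+ #|S| * fourier p f (Sprime S).
Proof.
move=> p k.
rewrite (step3 hm) /fourier mulr_sumr; apply: eq_bigr => x _.
rewrite (@prodV R m n hm) /pp /p /k.
ring.
Qed.
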